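(* There is an absolute constant $c>0$ such that the following holds. Let $p$ be a prime and let $f_1, f_2:\mathbb F_p \to\mathbb C$. Define $F:\mathbb F_p\to\mathbb C$ by $$F(x) =\frac 1p \sum_{y\in\mathbb F_p} f_1 (x+y)\, f_2 (x+y^2).$$ Then $$\big\Vert F-\mathbb E[f_1]\cdot \mathbb E[f_2]\big\Vert_2 \leq c\,p^{-\frac 1{10}} \Vert f_1\Vert_2 \cdot \Vert f_2\Vert_2 .$$
   Context: For $f:\mathbb F_p\to\mathbb C$, $\mathbb E[f]=\frac1p\sum_{x\in\mathbb F_p} f(x)$ and $\Vert f\Vert_2=\big(\frac1p\sum_{x\in\mathbb F_p}|f(x)|^2\big)^{1/2}$ (normalized counting measure). In $F-\mathbb E[f_1]\cdot\mathbb E[f_2]$, the product $\mathbb E[f_1]\mathbb E[f_2]$ denotes the constant function. *)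

(* Defs.v *)
From mathcomp Require Import all_boot all_algebra.
From mathcomp Require Import reals.
From mathcomp.real_closed Require Import complex.
Import GRing.Theory Num.Theory.
Local Open Scope ring_scope.
Local Open Scope complex_scope.

Set Implicit Arguments. Unset Strict Implicit. Unset Printing Implicit Defensive.

Definition expect (R : realType) (p : nat) (f : 'F_p -> R[i]) : R[i] :=
  (p%:R)^-1 * \sum_(x : 'F_p) f x.

Definition l2norm (R : realType) (p : nat) (f : 'F_p -> R[i]) : R :=
  Num.sqrt ((p%:R)^-1 * \sum_(x : 'F_p) (ComplexField.Normc.normc (f x)) ^+ 2).

Definition Fop (R : realType) (p : nat) (f1 f2 : 'F_p -> R[i]) (x : 'F_p) : R[i] :=
  (p%:R)^-1 * \sum_(y : 'F_p) f1 (x + y) * f2 (x + y ^+ 2).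

(* Main.v *)
Require Import Defs.
From mathcomp Require Import all_boot all_algebra.
From mathcomp Require Import reals exp.
From mathcomp.real_closed Require Import complex.
From mathcomp Require Import all_order.
From mathcomp Require Import ring lra.
Import Order.TTheory GRing.Theory Num.Theory.
Local Open Scope ring_scope.
Local Open Scope complex_scope.
Set Implicit Arguments. Unset Strict Implicit. Unset Printing Implicit Defensive.

Module Dev.


Section NC.
Variable R : realType.
Local Notation C := R[i].
Local Notation nc := (@ComplexField.Normc.normc R).

Lemma nc_ge0 (z : C) : 0 <= nc z.
Proof. by case: z => a b; rewrite /ComplexField.Normc.normc sqrtr_ge0. Qed.

Lemma ncM (x y : C) : nc (x * y) = nc x * nc y.
Proof. exact: ComplexField.Normc.normcM. Qed.

Lemma ncD (x y : C) : nc (x + y) <= nc x + nc y.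
Proof. exact: le_normcD. Qed.

Lemma nc_sum (I : finType) (f : I -> C) : nc (\sum_i f i) <= \sum_i nc (f i).
Proof.
elim/big_ind2: _ => //.
- by rewrite ComplexField.Normc.normc0.
- move=> x1 x2 y1 y2 h1 h2; apply: le_trans (ncD _ _) _; exact: lerD.
Qed.

Lemma nc_sqr (z : C) : ((nc z) ^+ 2)%:C = z * conjc z.
Proof.
case: z => a b; rewrite /ComplexField.Normc.normc sqr_sqrtr; last first.
  by rewrite addr_ge0 // sqr_ge0.
by apply/eqP; rewrite eq_complex /=; apply/andP; split; apply/eqP; ring.
Qed.

Lemma nc_conj (z : C) : nc (conjc z) = nc z.
Proof. by case: z => a b; rewrite /ComplexField.Normc.normc /= sqrrN. Qed.

Lemma nc_real (r : R) : 0 <= r -> nc (r%:C) = r.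
Proof.
move=> r0; rewrite /ComplexField.Normc.normc /= expr0n /= addr0 sqrtr_sqr.
by rewrite ger0_norm.
Qed.

Lemma Re_le_nc (z : C) : complex.Re z <= nc z.
Proof.
case: z => a b; rewrite /ComplexField.Normc.normc /=.
apply: le_trans (ler_norm a) _; rewrite -sqrtr_sqr.
by apply: ler_wsqrtr; rewrite lerDl sqr_ge0.
Qed.

Lemma nc_sqr_Re (z : C) : (nc z) ^+ 2 = complex.Re (z * conjc z).
Proof. by rewrite -nc_sqr. Qed.

Lemma cs_real (I : finType) (x y : I -> R) :
  (\sum_i x i * y i) ^+ 2 <= (\sum_i x i ^+ 2) * (\sum_i y i ^+ 2).
Proof.
set X := \sum_i x i ^+ 2; set Y := \sum_i y i ^+ 2; set S := \sum_i x i * y i.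
have X0 : 0 <= X by apply: sumr_ge0 => i _; exact: sqr_ge0.
have E : \sum_i (X * y i - S * x i) ^+ 2 = X * (X * Y - S ^+ 2).
  have E1 : forall i, (X * y i - S * x i) ^+ 2 =
     X ^+ 2 * y i ^+ 2 - (2%:R * X * S) * (x i * y i) + S ^+ 2 * x i ^+ 2.
    by move=> i; ring.
  rewrite (eq_bigr _ (fun i _ => E1 i)) !big_split /= sumrN -!mulr_sumr.
  rewrite -/X -/Y -/S; ring.
have H : 0 <= X * (X * Y - S ^+ 2).
  by rewrite -E; apply: sumr_ge0 => i _; exact: sqr_ge0.
case: (ltrgtP 0 X) => [Xp||X00]; last 2 first.
- by move=> h; move: X0; rewrite leNgt h.
- have x0 : forall i, x i = 0.
    move=> i; apply/eqP; rewrite -sqrf_eq0; apply/eqP.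
    apply/eqP; rewrite eq_le sqr_ge0 andbT.
    have := X00; rewrite /X => /esym /eqP; rewrite psumr_eq0; last by move=> j _; exact: sqr_ge0.
    by move=> /allP /(_ i (mem_index_enum _)) /eqP ->.
  rewrite /S big1 ?expr0n /=; first by rewrite mulr_ge0 // sumr_ge0 // => i _; exact: sqr_ge0.
  by move=> i _; rewrite x0 mul0r.
- by move: H; rewrite pmulr_rge0 // subr_ge0.
Qed.

Lemma cs_c (I : finType) (a b : I -> C) :
  (nc (\sum_i a i * b i)) ^+ 2 <= (\sum_i nc (a i) ^+ 2) * (\sum_i nc (b i) ^+ 2).
Proof.
apply: le_trans (cs_real (fun i => nc (a i)) (fun i => nc (b i))).
rewrite ler_pXn2r // ?nnegrE ?nc_ge0 //; last by apply: sumr_ge0 => i _; rewrite mulr_ge0 // nc_ge0.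
apply: le_trans (nc_sum _) _; apply: ler_sum => i _; by rewrite ncM.
Qed.
End NC.


Section Chars.
Variable R : realType.
Local Notation C := R[i].
Local Notation nc := (@ComplexField.Normc.normc R).
Variable p : nat.
Hypothesis pP : prime p.
Local Notation F := 'F_p.
Local Notation m := (Zp_trunc (pdiv p)).+2.
Variable w : C.
Hypothesis wm : w ^+ m = 1.
Hypothesis ws : \sum_(i < m) w ^+ i = 0.

Definition e (x : F) : C := w ^+ (x : nat).

Lemma eD x y : e (x + y) = e x * e y.
Proof. rewrite /e -exprD; exact: (expr_mod _ wm). Qed.

Lemma e0 : e 0 = 1.
Proof. by rewrite /e expr0. Qed.

Lemma eN x : e x * e (- x) = 1.
Proof. by rewrite -eD subrr e0. Qed.

Lemma nc_w : nc w = 1.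
Proof.
have h : nc w ^+ m = 1.
  have : forall n, nc (w ^+ n) = nc w ^+ n.
    by elim=> [|n IH]; rewrite ?expr0 ?ComplexField.Normc.normc1 // !exprS ncM IH.
  by move=> <-; rewrite wm ComplexField.Normc.normc1.
by apply/eqP; rewrite -(pexpr_eq1 (n := m)) ?nc_ge0 // h.
Qed.

Lemma nc_e x : nc (e x) = 1.
Proof.
rewrite /e; elim: (x : nat) => [|n IH]; rewrite ?expr0 ?ComplexField.Normc.normc1 //.
by rewrite exprS ncM IH nc_w mulr1.
Qed.

Lemma e_conj x : conjc (e x) = e (- x).
Proof.
have h : e x * conjc (e x) = 1 by rewrite -nc_sqr nc_e expr1n.
by rewrite -[conjc _]mul1r -(eN x) mulrAC h mul1r.
Qed.

Lemma e_norm x : e x * conjc (e x) = 1.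
Proof. by rewrite -nc_sqr nc_e expr1n. Qed.

Lemma sum_e : \sum_(x : F) e x = 0.
Proof. exact: ws. Qed.

Lemma orth (a : F) : \sum_(x : F) e (a * x) = if a == 0 then p%:R else 0.
Proof.
case: eqP => [->|/eqP a0].
  under eq_bigr do rewrite mul0r e0.
  by rewrite sumr_const card_Fp.
transitivity (\sum_(x : F) e x); last exact: sum_e.
by rewrite [RHS](reindex_inj (mulfI a0)).
Qed.

Lemma orth' (a : F) : \sum_(x : F) e (x * a) = if a == 0 then p%:R else 0.
Proof. under eq_bigr do rewrite mulrC. exact: orth. Qed.

Lemma pC_neq0 : (p%:R : C) != 0.
Proof.
rewrite pnatr_eq0 -lt0n; exact: prime_gt0.
Qed.

End Chars.

Section Gauss.
Variable R : realType.
Local Notation C := R[i].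
Local Notation nc := (@ComplexField.Normc.normc R).
Variable p : nat.
Hypothesis pP : prime p.
Hypothesis p2 : p != 2%N.
Local Notation F := 'F_p.
Local Notation m := (Zp_trunc (pdiv p)).+2.
Variable w : C.
Hypothesis wm : w ^+ m = 1.
Hypothesis ws : \sum_(i < m) w ^+ i = 0.
Local Notation e := (@e R p w).

Lemma two_neq0 : (2%:R : F) != 0.
Proof.
rewrite -(dvdn_pcharf (pchar_Fp pP)); apply/negP => /(dvdn_leq (isT : (0 < 2)%N)) h.
have := prime_gt1 pP; move: p2 h; case: p => [|[|[|n]]] //.
Qed.

Lemma gauss_sq (a b : F) :
  (\sum_(u : F) e (a * u ^+ 2 + b * u)) * conjc (\sum_(v : F) e (a * v ^+ 2 + b * v))
  = if a != 0 then p%:R else if b == 0 then (p%:R) ^+ 2 else 0.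
Proof.
rewrite rmorph_sum /= big_distrl /=.
under eq_bigr => u _ do rewrite big_distrr /=.
rewrite exchange_big /=.
have step : forall v : F, \sum_(u : F) e (a * u ^+ 2 + b * u) * conjc (e (a * v ^+ 2 + b * v))
   = \sum_(h : F) e (a * h ^+ 2 + b * h) * e ((2%:R * a * h) * v).
  move=> v; rewrite (reindex_inj (addIr v)) /=; apply: eq_bigr => h _.
  rewrite (e_conj wm) -!(eD wm); congr e; ring.
under eq_bigr do rewrite step.
rewrite exchange_big /=.
under eq_bigr do rewrite -big_distrr /= (orth pP ws).
case: eqP => [a0|/eqP a0].
  rewrite a0 /=.
  under eq_bigr do rewrite mulr0 mul0r eqxx mul0r add0r.
  rewrite -big_distrl /=.
  transitivity ((if b == 0 then p%:R else 0) * (p%:R : C)).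
    by congr (_ * _); exact: (orth pP ws b).
  by case: (b == 0); rewrite ?mul0r ?expr2.
rewrite (bigD1 0) //= big1 ?addr0.
  by rewrite mulr0 expr0n mulr0 add0r mulr0 eqxx e0 mul1r.
move=> h h0; rewrite mulf_eq0 mulf_eq0 (negbTE two_neq0) (negbTE a0) /=.
by rewrite (negbTE h0) mulr0.
Qed.

Lemma gauss_nc (a b : F) :
  (nc (\sum_(u : F) e (a * u ^+ 2 + b * u))) ^+ 2
  = if a != 0 then p%:R else if b == 0 then (p%:R) ^+ 2 else 0.
Proof.
apply: (@complexI R); rewrite nc_sqr gauss_sq.
by case: ifP => _; last case: ifP => _; rewrite /= ?rmorphXn ?rmorph_nat ?rmorph0.
Qed.

End Gauss.


Lemma phase_id (K : fieldType) (u d eta eta' : K) :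
  - (u ^+ 2 / (4 * eta)) - - ((u - d) ^+ 2 / (4 * (eta + d))) -
  - (u ^+ 2 / (4 * eta')) - (u - d) ^+ 2 / (4 * (eta' + d)) =
  d ^+ 2 / (4 * (eta + d)) - d ^+ 2 / (4 * (eta' + d)) +
  ((- (4 * eta)^-1 + (4 * (eta + d))^-1 + (4 * eta')^-1 - (4 * (eta' + d))^-1) *
   u ^+ 2 + (- (2 * d) / (4 * (eta + d)) + 2 * d / (4 * (eta' + d))) * u).
Proof. rewrite !invfM. ring. Qed.

Lemma be_id (K : fieldType) (d eta eta' : K) : (2 : K) != 0 -> (4 : K) != 0 -> eta + d != 0 -> eta' + d != 0 ->
  - (2 * d) / (4 * (eta + d)) + (2 * d) / (4 * (eta' + d)) = d * (eta - eta') / (2 * (eta + d) * (eta' + d)).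
Proof. move=> h1 h2 h3 h4. field. by rewrite h1 h2 h3 h4. Qed.

Section Core.
Variable R : realType.
Local Notation C := R[i].
Local Notation nc := (@ComplexField.Normc.normc R).
Variable p : nat.
Hypothesis pP : prime p.
Hypothesis p2 : p != 2%N.
Local Notation F := 'F_p.
Local Notation m := (Zp_trunc (pdiv p)).+2.
Variable w : C.
Hypothesis wm : w ^+ m = 1.
Hypothesis ws : \sum_(i < m) w ^+ i = 0.
Local Notation e := (@e R p w).

Lemma two_F : (2 : F) != 0.
Proof. exact: two_neq0 pP p2. Qed.

Lemma four_F : (4 : F) != 0.
Proof. by rewrite (_ : 4 = 2 * 2 :> F) ?mulf_neq0 ?two_F //; ring. Qed.

Lemma eDF (x y : F) : e x * e y = e (x + y).
Proof. by rewrite (eD wm). Qed.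

Lemma eCF (x : F) : conjc (e x) = e (- x).
Proof. exact: (e_conj wm). Qed.

Definition S (u eta : F) : C := (p%:R)^-1 * \sum_(y : F) e (eta * y ^+ 2 + u * y).

Lemma complete_sq (u eta : F) : eta != 0 ->
  \sum_(y : F) e (eta * y ^+ 2 + u * y) = e (- (u ^+ 2 / (4 * eta))) * \sum_(y : F) e (eta * y ^+ 2 + 0 * y).
Proof.
move=> e0.
rewrite (reindex_inj (addIr (- (u / (2 * eta))))) /= big_distrr /=.
apply: eq_bigr => y _; rewrite -(eD wm); congr e.
by field; rewrite e0 two_F four_F.
Qed.


Lemma S_cs (u eta : F) : eta != 0 -> S u eta = e (- (u ^+ 2 / (4 * eta))) * S 0 eta.
Proof. by move=> h; rewrite /S complete_sq // mulrCA. Qed.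

Lemma pR_gt0 : (0 : R) < p%:R.
Proof. by rewrite ltr0n prime_gt0. Qed.

Lemma nc_pinv : nc ((p%:R)^-1 : C) = (p%:R : R)^-1.
Proof.
have -> : ((p%:R)^-1 : C) = ((p%:R : R)^-1)%:C by rewrite fmorphV /= rmorph_nat.
by rewrite nc_real // invr_ge0 ltW // pR_gt0.
Qed.

Lemma nc_S0 (eta : F) : eta != 0 -> nc (S 0 eta) ^+ 2 = (p%:R : R)^-1.
Proof.
move=> h; rewrite /S ncM exprMn nc_pinv (gauss_nc pP p2 wm ws) h.
have := pR_gt0; rewrite expr2 => hp.
by field; rewrite gt_eqF.
Qed.

Lemma nc_S_le1 (u eta : F) : nc (S u eta) <= 1.
Proof.
rewrite /S ncM nc_pinv.
apply: le_trans (ler_wpM2l _ (nc_sum _)) _; first by rewrite invr_ge0 ltW // pR_gt0.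
under eq_bigr do rewrite (nc_e wm).
rewrite sumr_const card_Fp // -[1 *+ p]/(p%:R : R) mulVf //.
by rewrite gt_eqF // pR_gt0.
Qed.


Definition M (d u eta : F) : C := S u eta * conjc (S (u - d) (eta + d)).
Definition N (d eta eta' : F) : C := \sum_(u : F) M d u eta * conjc (M d u eta').

Lemma N_bound (d eta eta' : F) : d != 0 -> eta != 0 -> eta + d != 0 ->
  eta' != 0 -> eta' + d != 0 ->
  nc (N d eta eta') ^+ 2 <= ((p%:R : R)^-1) ^+ 3 + (if eta == eta' then ((p%:R : R)^-1) ^+ 2 else 0).
Proof.
move=> d0 h1 h2 h3 h4.
set ga := - (4 * eta)^-1 + (4 * (eta + d))^-1 + (4 * eta')^-1 - (4 * (eta' + d))^-1.
set be := - (2 * d) / (4 * (eta + d)) + (2 * d) / (4 * (eta' + d)).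
set de := d ^+ 2 / (4 * (eta + d)) - d ^+ 2 / (4 * (eta' + d)).
set ka := S 0 eta * conjc (S 0 (eta + d)) * conjc (S 0 eta') * S 0 (eta' + d).
have EN : N d eta eta' = ka * e de * \sum_(u : F) e (ga * u ^+ 2 + be * u).
  rewrite /N big_distrr /=; apply: eq_bigr => u _.
  rewrite /M (S_cs _ h1) (S_cs _ h2) (S_cs _ h3) (S_cs _ h4).
  rewrite /ka.
  move: (S 0 eta) (S 0 (eta + d)) (S 0 eta') (S 0 (eta' + d)) => s1 s2 s3 s4.
  rewrite !rmorphM /= conjcK !eCF.
  transitivity (s1 * conjc s2 * conjc s3 * s4 * (e (- ((u ^+ 2) / (4 * eta))) * e (- - ((u - d) ^+ 2 / (4 * (eta + d))))
     * e (- - (u ^+ 2 / (4 * eta'))) * e (- ((u - d) ^+ 2 / (4 * (eta' + d)))))).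
    rewrite conjcK; ring.
  rewrite !eDF -[RHS]mulrA eDF; congr (_ * e _).
  exact: phase_id.
have nka : nc ka ^+ 2 = ((p%:R : R)^-1) ^+ 4.
  rewrite /ka; move: (nc_S0 h1) (nc_S0 h2) (nc_S0 h3) (nc_S0 h4).
  move: (S 0 eta) (S 0 (eta + d)) (S 0 eta') (S 0 (eta' + d)) => s1 s2 s3 s4 n1 n2 n3 n4.
  by rewrite !ncM !nc_conj !exprMn n1 n2 n3 n4; ring.
clearbody ka.
rewrite EN ncM ncM (nc_e wm) mulr1 !exprMn nka (gauss_nc pP p2 wm ws).
have pi0 : (0 : R) < (p%:R)^-1 by rewrite invr_gt0 pR_gt0.
have pp : (p%:R : R) * (p%:R)^-1 = 1 by rewrite mulfV // gt_eqF // pR_gt0.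
case: ifP => hg.
  rewrite (_ : ((p%:R : R)^-1) ^+ 4 * p%:R = ((p%:R)^-1) ^+ 3); last first.
    by field; rewrite gt_eqF // pR_gt0.
  rewrite lerDl.
  by case: ifP => _ //; rewrite ?exprn_ge0 // ltW.
case: ifP => hb; last first.
  rewrite mulr0 addr_ge0 //; first exact: exprn_ge0 (ltW pi0).
  by case: ifP => _ //; exact: exprn_ge0 (ltW pi0).
have ee : eta = eta'.
  have : be = d * (eta - eta') / (2 * (eta + d) * (eta' + d)).
    by rewrite /be be_id // ?two_F ?four_F.
  move/eqP: hb => -> /esym /eqP; rewrite !mulf_eq0 invr_eq0 !mulf_eq0 (negbTE d0).
  rewrite (negbTE h2) (negbTE h4) (negbTE two_F) /= orbF subr_eq0 => /eqP //.
rewrite ee eqxx.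
rewrite (_ : ((p%:R : R)^-1) ^+ 4 * p%:R ^+ 2 = ((p%:R)^-1) ^+ 2); last first.
  by field; rewrite gt_eqF // pR_gt0.
rewrite lerDr.
by rewrite exprn_ge0 // ltW.
Qed.

End Core.


Lemma cs_c2 (R : realType) (I J : finType) (f g : I -> J -> R[i]) :
  (ComplexField.Normc.normc (\sum_i \sum_j f i j * g i j)) ^+ 2 <=
  (\sum_i \sum_j ComplexField.Normc.normc (f i j) ^+ 2) * (\sum_i \sum_j ComplexField.Normc.normc (g i j) ^+ 2).
Proof.
rewrite !pair_big /=.
exact: (cs_c (fun q : I * J => f q.1 q.2) (fun q => g q.1 q.2)).
Qed.

Section Core2.
Variable R : realType.
Local Notation C := R[i].
Local Notation nc := (@ComplexField.Normc.normc R).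
Variable p : nat.
Hypothesis pP : prime p.
Hypothesis p2 : p != 2%N.
Local Notation F := 'F_p.
Local Notation m := (Zp_trunc (pdiv p)).+2.
Variable w : C.
Hypothesis wm : w ^+ m = 1.
Hypothesis ws : \sum_(i < m) w ^+ i = 0.
Local Notation e := (@e R p w).
Local Notation S := (@S R p w).
Local Notation M := (@M R p w).
Local Notation N := (@N R p w).
Local Notation pi := ((p%:R : R)^-1).

Definition inD (d x : F) := (x != 0) && (x + d != 0).
Definition N' (d x y : F) : C := if inD d x && inD d y then N d x y else 0.

Lemma pi_gt0 : 0 < pi.
Proof. by rewrite invr_gt0 ltr0n prime_gt0. Qed.

Lemma W_bound (d : F) : d != 0 ->
  \sum_(x : F) \sum_(y : F) nc (N' d x y) ^+ 2 <= 2%:R * pi.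
Proof.
move=> d0.
apply: le_trans (_ : \sum_(x : F) \sum_(y : F) (pi ^+ 3 + (if x == y then pi ^+ 2 else 0)) <= _).
  apply: ler_sum => x _; apply: ler_sum => y _.
  rewrite /N'; case: ifP => [/andP [/andP [h1 h2] /andP [h3 h4]]|_].
    exact: (N_bound pP p2 wm ws).
  rewrite ComplexField.Normc.normc0 expr0n /= addr_ge0 //; first exact: exprn_ge0 (ltW pi_gt0).
  by case: ifP => _ //; exact: exprn_ge0 (ltW pi_gt0).
have pp : (p%:R : R) * pi = 1 by rewrite mulfV // gt_eqF // ltr0n prime_gt0.
under eq_bigr => x _.
  rewrite big_split /= sumr_const card_Fp // (bigD1 x) //= eqxx big1; last first.
    by move=> y /negbTE; rewrite eq_sym => ->.
  over.
rewrite /= sumr_const card_Fp // addr0.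
rewrite -[_ *+ p]mulr_natl -mulr_natl.
rewrite le_eqVlt; apply/orP; left; apply/eqP.
have ->: (p%:R : R) = pi^-1 by rewrite invrK.
by field; rewrite pnatr_eq0 -lt0n prime_gt0.
Qed.


Variables A B : F -> C.
Hypothesis B0 : B 0 = 0.

Definition T (d : F) := \sum_(u : F) \sum_(x : F)
  A u * B x * S u x * conjc (A (u - d) * B (x + d) * S (u - d) (x + d)).
Definition ad (d : F) := \sum_(u : F) nc (A u) ^+ 2 * nc (A (u - d)) ^+ 2.
Definition bd (d : F) := \sum_(x : F) nc (B x) ^+ 2 * nc (B (x + d)) ^+ 2.

Opaque Dev.S.

Lemma T_split d : T d = \sum_(u : F) (A u * conjc (A (u - d))) *
   (\sum_(x : F) (B x * conjc (B (x + d))) * M d u x).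
Proof.
rewrite /T; apply: eq_bigr => u _; rewrite big_distrr; apply: eq_bigr => x _.
rewrite /M !rmorphM /=; ring.
Qed.


Definition be (d x : F) := B x * conjc (B (x + d)).
Definition V (d u : F) := \sum_(x : F) be d x * M d u x.

Lemma be0 d x : ~~ inD d x -> be d x = 0.
Proof.
rewrite /inD negb_and !negbK => /orP [] /eqP h; rewrite /be h B0 ?mul0r //.
by rewrite rmorph0 mulr0.
Qed.

Lemma SV_eq d : (\sum_(u : F) nc (V d u) ^+ 2)%:C =
  \sum_(x : F) \sum_(y : F) (be d x * conjc (be d y)) * N' d x y.
Proof.
rewrite rmorph_sum /=; under eq_bigr do rewrite nc_sqr.
rewrite /V.
under eq_bigr do rewrite rmorph_sum big_distrl /=.
under eq_bigr do under eq_bigr do rewrite big_distrr /=.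
rewrite exchange_big /=.
apply: eq_bigr => x _; rewrite exchange_big /=; apply: eq_bigr => y _.
have -> : be d x * conjc (be d y) * N' d x y = be d x * conjc (be d y) * N d x y.
  rewrite /N'; case: ifP => // /negbT; rewrite negb_and => /orP [] /be0 ->.
  - by rewrite !mul0r.
  - by rewrite rmorph0 !mulr0 mul0r.
rewrite /N big_distrr /=; apply: eq_bigr => u _.
rewrite rmorphM /=; ring.
Qed.

Lemma sum_be2 d : \sum_(x : F) \sum_(y : F) nc (be d x * conjc (be d y)) ^+ 2 = bd d ^+ 2.
Proof.
rewrite expr2 /bd big_distrl /=; apply: eq_bigr => x _; rewrite big_distrr /=.
apply: eq_bigr => y _; rewrite /be ?ncM ?nc_conj ?ncM ?nc_conj; ring.
Qed.

Lemma sum_al2 d : \sum_(u : F) nc (A u * conjc (A (u - d))) ^+ 2 = ad d.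
Proof. by apply: eq_bigr => u _; rewrite ncM nc_conj exprMn. Qed.

Lemma T_bound d : d != 0 -> nc (T d) ^+ 4 <= ad d ^+ 2 * bd d ^+ 2 * (2%:R * pi).
Proof.
move=> d0.
set SV := \sum_(u : F) nc (V d u) ^+ 2.
have SV0 : 0 <= SV by apply: sumr_ge0 => u _; exact: exprn_ge0 (nc_ge0 _).
have h1 : nc (T d) ^+ 2 <= ad d * SV.
  rewrite T_split -sum_al2; exact: cs_c.
have h2 : SV ^+ 2 <= bd d ^+ 2 * (2%:R * pi).
  have : SV <= nc (\sum_(x : F) \sum_(y : F) (be d x * conjc (be d y)) * N' d x y).
    by rewrite -SV_eq; apply: le_trans (Re_le_nc _); rewrite /=.
  move=> h; apply: le_trans (_ : nc (\sum_(x : F) \sum_(y : F) (be d x * conjc (be d y)) * N' d x y) ^+ 2 <= _).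
    by rewrite ler_pXn2r // ?nnegrE // nc_ge0.
  apply: le_trans (cs_c2 _ _) _; rewrite sum_be2.
  by rewrite ler_wpM2l ?exprn_ge0 // ?W_bound //; rewrite /bd sumr_ge0 // => x _; rewrite mulr_ge0 // exprn_ge0 // nc_ge0.
have a0 : 0 <= ad d by rewrite /ad sumr_ge0 // => x _; rewrite mulr_ge0 // exprn_ge0 // nc_ge0.
rewrite (_ : 4 = 2 * 2)%N // exprM.
apply: le_trans (_ : (ad d * SV) ^+ 2 <= _).
  by rewrite ler_pXn2r // ?nnegrE ?exprn_ge0 ?mulr_ge0 // nc_ge0.
by rewrite exprMn -mulrA ler_wpM2l // exprn_ge0.
Qed.

End Core2.


Lemma gen_id1 (K : zmodType) (u x d : K) : u + x - (x + d) = u - d.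
Proof. by rewrite opprD addrA addrK. Qed.

Section Core3.
Variable R : realType.
Local Notation C := R[i].
Local Notation nc := (@ComplexField.Normc.normc R).
Variable p : nat.
Hypothesis pP : prime p.
Local Notation F := 'F_p.
Local Notation m := (Zp_trunc (pdiv p)).+2.
Variable w : C.
Hypothesis wm : w ^+ m = 1.
Hypothesis ws : \sum_(i < m) w ^+ i = 0.
Local Notation e := (@e R p w).
Local Notation S := (@S R p w).
Local Notation pi := ((p%:R : R)^-1).
Opaque Dev.S.

Variables A B : F -> C.

Definition Cc (z : F) : C := \sum_(x : F) A (z - x) * B x * S (z - x) x.
Definition XA := \sum_(u : F) nc (A u) ^+ 2.
Definition XB := \sum_(u : F) nc (B u) ^+ 2.

Lemma XA_ge0 : 0 <= XA.
Proof. by apply: sumr_ge0 => u _; exact: exprn_ge0 (nc_ge0 _). Qed.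
Lemma XB_ge0 : 0 <= XB.
Proof. by apply: sumr_ge0 => u _; exact: exprn_ge0 (nc_ge0 _). Qed.

Lemma sum_shiftA (z : F) : \sum_(x : F) nc (A (z - x)) ^+ 2 = XA.
Proof.
by rewrite /XA (reindex_inj (subrI z)) /=; apply: eq_bigr => x _; rewrite opprB addrC subrK.
Qed.

Lemma trivial_bound : \sum_(z : F) nc (Cc z) ^+ 2 <= p%:R * (XA * XB).
Proof.
have h : forall z, nc (Cc z) ^+ 2 <= XA * XB.
  move=> z; rewrite /Cc.
  under eq_bigr do rewrite -mulrA.
  apply: le_trans (cs_c _ _) _; rewrite sum_shiftA ler_wpM2l ?XA_ge0 //.
  apply: ler_sum => x _; rewrite ncM exprMn ler_piMr ?exprn_ge0 ?nc_ge0 //.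
  by rewrite expr_le1 ?nc_ge0 // (nc_S_le1 pP wm).
apply: le_trans (ler_sum _ (fun z _ => h z)) _.
by rewrite sumr_const card_Fp // mulr_natl.
Qed.

End Core3.

Section Core4.
Variable R : realType.
Local Notation C := R[i].
Local Notation nc := (@ComplexField.Normc.normc R).
Variable p : nat.
Hypothesis pP : prime p.
Hypothesis p2 : p != 2%N.
Local Notation F := 'F_p.
Local Notation m := (Zp_trunc (pdiv p)).+2.
Variable w : C.
Hypothesis wm : w ^+ m = 1.
Hypothesis ws : \sum_(i < m) w ^+ i = 0.
Local Notation e := (@e R p w).
Local Notation S := (@S R p w).
Local Notation pi := ((p%:R : R)^-1).
Opaque Dev.S.

Variables A B : F -> C.
Hypothesis B0 : B 0 = 0.
Local Notation Cc := (Cc w A B).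
Local Notation T := (T w A B).
Local Notation XA := (XA A).
Local Notation XB := (XB B).

Lemma sum_T : (\sum_(z : F) nc (Cc z) ^+ 2)%:C = \sum_(d : F) T d.
Proof.
rewrite rmorph_sum /=; under eq_bigr do rewrite nc_sqr.
rewrite /Cc.
under eq_bigr => z _.
  rewrite rmorph_sum big_distrl /=.
  under eq_bigr => x _.
    rewrite big_distrr /= (reindex_inj (addrI x)) /=.
  over.
  rewrite exchange_big /=.
over.
rewrite exchange_big /=; apply: eq_bigr => d _.
rewrite exchange_big /= /T [RHS]exchange_big /=; apply: eq_bigr => x _.
rewrite (reindex_inj (addIr x)) /=; apply: eq_bigr => u _.
by rewrite addrK gen_id1.
Qed.


Lemma T0_bound : nc (T 0) <= pi * (XA * XB).
Proof.
rewrite /T; apply: le_trans (nc_sum _) _.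
rewrite /XA /XB big_distrl big_distrr /=; apply: ler_sum => u _.
apply: le_trans (nc_sum _) _.
rewrite big_distrr big_distrr /=; apply: ler_sum => x _.
rewrite subr0 addr0 -nc_sqr nc_real ?exprn_ge0 ?nc_ge0 //.
rewrite ncM ncM !exprMn.
have [->|x0] := eqVneq x 0.
  by rewrite B0 ComplexField.Normc.normc0 expr0n /= !mulr0 mul0r.
rewrite (S_cs pP p2 wm) // ncM (nc_e wm) mul1r (nc_S0 pP p2 wm ws) //.
by rewrite le_eqVlt; apply/orP; left; apply/eqP; ring.
Qed.

Definition rr : R := Num.sqrt (Num.sqrt (2%:R * pi)).

Lemma rr_ge0 : 0 <= rr.
Proof. exact: sqrtr_ge0. Qed.

Lemma rr4 : rr ^+ 4 = 2%:R * pi.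
Proof.
rewrite /rr (_ : 4 = 2 * 2)%N // exprM !sqr_sqrtr //.
  by rewrite mulr_ge0 // ltW // (pi_gt0 R pP).
exact: sqrtr_ge0.
Qed.

Lemma ad_ge0 d : 0 <= ad A d.
Proof. by rewrite /ad sumr_ge0 // => x _; rewrite mulr_ge0 // exprn_ge0 // nc_ge0. Qed.
Lemma bd_ge0 d : 0 <= bd B d.
Proof. by rewrite /bd sumr_ge0 // => x _; rewrite mulr_ge0 // exprn_ge0 // nc_ge0. Qed.

Lemma Td_bound d : d != 0 -> nc (T d) <= rr * (Num.sqrt (ad A d) * Num.sqrt (bd B d)).
Proof.
move=> d0.
rewrite -(ler_pXn2r (isT : (0 < 4)%N)) ?nnegrE ?nc_ge0 ?mulr_ge0 ?rr_ge0 ?sqrtr_ge0 //.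
apply: le_trans (T_bound pP p2 wm ws A B0 d0) _.
rewrite !exprMn rr4 (_ : 4 = 2 * 2)%N // !exprM !sqr_sqrtr ?ad_ge0 ?bd_ge0 //.
by rewrite le_eqVlt; apply/orP; left; apply/eqP; ring.
Qed.

Lemma sum_ad : \sum_(d : F) ad A d = XA ^+ 2.
Proof.
rewrite /ad exchange_big expr2 /XA big_distrl /=; apply: eq_bigr => u _.
rewrite -big_distrr /=; congr (_ * _).
by rewrite (reindex_inj (subrI u)) /=; apply: eq_bigr => x _; rewrite opprB addrC subrK.
Qed.

Lemma sum_bd : \sum_(d : F) bd B d = XB ^+ 2.
Proof.
rewrite /bd exchange_big expr2 /XB big_distrl /=; apply: eq_bigr => u _.
rewrite -big_distrr /=; congr (_ * _).
by rewrite (reindex_inj (addrI (- u))) /=; apply: eq_bigr => x _; rewrite addrA subrr add0r.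
Qed.

Lemma sum_sqrt : \sum_(d : F) Num.sqrt (ad A d) * Num.sqrt (bd B d) <= XA * XB.
Proof.
rewrite -(ler_pXn2r (isT : (0 < 2)%N)) ?nnegrE ?mulr_ge0 ?XA_ge0 ?XB_ge0 //; last first.
  by apply: sumr_ge0 => d _; rewrite mulr_ge0 ?sqrtr_ge0.
apply: le_trans (cs_real _ _) _.
under eq_bigr do rewrite sqr_sqrtr ?ad_ge0 //.
under [X in _ * X <= _]eq_bigr do rewrite sqr_sqrtr ?bd_ge0 //.
by rewrite sum_ad sum_bd exprMn.
Qed.

Lemma core_bound : \sum_(z : F) nc (Cc z) ^+ 2 <= (pi + rr) * (XA * XB).
Proof.
have -> : \sum_(z : F) nc (Cc z) ^+ 2 = complex.Re ((\sum_(z : F) nc (Cc z) ^+ 2)%:C) by [].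
rewrite sum_T; apply: le_trans (Re_le_nc _) _.
apply: le_trans (nc_sum _) _.
rewrite (bigD1 0) //= mulrDl lerD ?T0_bound //.
apply: le_trans (_ : \sum_(d | d != 0) rr * (Num.sqrt (ad A d) * Num.sqrt (bd B d)) <= _).
  by apply: ler_sum => d d0; exact: Td_bound.
rewrite -big_distrr /= ler_wpM2l ?rr_ge0 //.
apply: le_trans sum_sqrt.
rewrite [X in _ <= X](bigD1 0) //= lerDr.
by rewrite mulr_ge0 ?sqrtr_ge0.
Qed.

End Core4.


Lemma gen_id2 (K : comRingType) (x y xi eta : K) :
  xi * (x + y) + eta * (x + y ^+ 2) = (eta * y ^+ 2 + xi * y) + (xi + eta) * x.
Proof. ring. Qed.

Lemma gen_id3 (K : comRingType) (x y : K) : x * y - y * x = 0.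
Proof. ring. Qed.

Lemma gen_id4 (K : comRingType) (xi x y : K) : xi * x - xi * y = (x - y) * xi.
Proof. ring. Qed.

Lemma gen_id5 (K : comRingType) (z x z' : K) : z * x + - (z' * x) = x * z - x * z'.
Proof. ring. Qed.

Lemma gen_id6 (K : comRingType) (xi x y : K) : - (xi * y) + xi * x = (x - y) * xi.
Proof. ring. Qed.

Section Fourier.
Variable R : realType.
Local Notation C := R[i].
Local Notation nc := (@ComplexField.Normc.normc R).
Variable p : nat.
Hypothesis pP : prime p.
Local Notation F := 'F_p.
Local Notation m := (Zp_trunc (pdiv p)).+2.
Variable w : C.
Hypothesis wm : w ^+ m = 1.
Hypothesis ws : \sum_(i < m) w ^+ i = 0.
Local Notation e := (@e R p w).
Local Notation S := (@S R p w).
Local Notation pi := ((p%:R : R)^-1).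
Opaque Dev.S.

Lemma eDF' (x y : F) : e x * e y = e (x + y).
Proof. by rewrite (eD wm). Qed.
Lemma eCF' (x : F) : conjc (e x) = e (- x).
Proof. exact: (e_conj wm). Qed.
Lemma pCn0 : (p%:R : C) != 0.
Proof. by rewrite pnatr_eq0 -lt0n prime_gt0. Qed.

Definition fh (f : F -> C) (xi : F) : C := (p%:R)^-1 * \sum_(x : F) f x * e (- (xi * x)).

Lemma orth_diff (x y : F) : \sum_(xi : F) e (xi * x - xi * y) = if x == y then p%:R else 0.
Proof.
have -> : \sum_(xi : F) e (xi * x - xi * y) = \sum_(xi : F) e ((x - y) * xi).
  by apply: eq_bigr => xi _; congr e; exact: gen_id4.
by rewrite (orth pP ws) subr_eq0.
Qed.

Lemma orth_diff' (x y : F) : \sum_(xi : F) e (- (xi * y) + xi * x) = if x == y then p%:R else 0.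
Proof.
have -> : \sum_(xi : F) e (- (xi * y) + xi * x) = \sum_(xi : F) e ((x - y) * xi).
  by apply: eq_bigr => xi _; congr e; exact: gen_id6.
by rewrite (orth pP ws) subr_eq0.
Qed.

Lemma inversion (f : F -> C) (x : F) : f x = \sum_(xi : F) fh f xi * e (xi * x).
Proof.
rewrite /fh.
under eq_bigr do rewrite -mulrA big_distrl /=.
rewrite -big_distrr /= exchange_big /=.
under eq_bigr => y _.
  under eq_bigr do rewrite -mulrA eDF'.
  rewrite -big_distrr /= orth_diff'.
  over.
rewrite (bigD1 x) //= eqxx big1 ?addr0; last by move=> y /negbTE; rewrite eq_sym => ->; rewrite mulr0.
by rewrite mulrCA mulVf ?mulr1 // pCn0.
Qed.

Lemma parseval_trig (c : F -> C) :
  pi * \sum_(x : F) nc (\sum_(z : F) c z * e (z * x)) ^+ 2 = \sum_(z : F) nc (c z) ^+ 2.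
Proof.
apply: (@complexI R).
rewrite rmorphM rmorph_sum /= fmorphV /= rmorph_nat.
under eq_bigr do rewrite nc_sqr rmorph_sum big_distrl /=.
under eq_bigr do under eq_bigr do rewrite big_distrr /=.
rewrite exchange_big /=.
under eq_bigr do rewrite exchange_big /=.
rewrite [RHS]rmorph_sum /= big_distrr /=; apply: eq_bigr => z _.
under eq_bigr => z' _.
  under eq_bigr do rewrite rmorphM /= eCF' mulrACA eDF'.
  rewrite -big_distrr /=.
  over.
rewrite /= (bigD1 z) //= [X in _ + X]big1 ?addr0.
  rewrite (_ : \sum_(x : F) e (z * x + - (z * x)) = p%:R).
    by rewrite nc_sqr mulrCA mulVf ?mulr1 // pCn0.
  under eq_bigr do rewrite subrr e0.
  by rewrite sumr_const card_Fp.
move=> z' /negbTE h; rewrite (_ : \sum_(x : F) e (z * x + - (z' * x)) = 0) ?mulr0 //.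
have -> : \sum_(x : F) e (z * x + - (z' * x)) = \sum_(x : F) e (x * z - x * z').
  by apply: eq_bigr => x _; congr e; exact: gen_id5.
by rewrite orth_diff eq_sym h.
Qed.


Lemma parseval (f : F -> C) : \sum_(xi : F) nc (fh f xi) ^+ 2 = pi * \sum_(x : F) nc (f x) ^+ 2.
Proof.
rewrite -parseval_trig; congr (_ * _); apply: eq_bigr => x _.
by rewrite -inversion.
Qed.

Definition expect0 (f : F -> C) : C := (p%:R)^-1 * \sum_(x : F) f x.
Definition Fop0 (f1 f2 : F -> C) (x : F) : C :=
  (p%:R)^-1 * \sum_(y : F) f1 (x + y) * f2 (x + y ^+ 2).

Definition Bof (f : F -> C) (eta : F) : C := if eta == 0 then 0 else fh f eta.

Lemma fh0 (f : F -> C) : fh f 0 = expect0 f.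
Proof.
rewrite /fh /expect0; congr (_ * _); apply: eq_bigr => x _.
by rewrite mul0r oppr0 e0 mulr1.
Qed.

Lemma split_f (f : F -> C) (z : F) : f z = expect0 f + \sum_(eta : F) Bof f eta * e (eta * z).
Proof.
rewrite {1}(inversion f z) (bigD1 0) //= [X in _ = _ + X](bigD1 0) //=.
rewrite [Bof f 0]/Bof eqxx !mul0r add0r e0 mulr1 fh0; congr (_ + _).
by apply: eq_bigr => eta /negbTE h; rewrite /Bof h.
Qed.

Transparent Dev.S.
Lemma main_identity (f1 f2 : F -> C) (x : F) :
  Fop0 f1 f2 x - expect0 f1 * expect0 f2 =
  \sum_(z : F) Cc w (fh f1) (Bof f2) z * e (z * x).
Proof.
have E1 : (p%:R)^-1 * \sum_(y : F) f1 (x + y) = expect0 f1.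
  by rewrite /expect0 [in RHS](reindex_inj (addrI x)).
have -> : Fop0 f1 f2 x - expect0 f1 * expect0 f2 =
   (p%:R)^-1 * \sum_(y : F) f1 (x + y) * \sum_(eta : F) Bof f2 eta * e (eta * (x + y ^+ 2)).
  rewrite /Fop0.
  under eq_bigr do rewrite (split_f f2 (x + _ ^+ 2)) mulrDr.
  rewrite big_split /= mulrDr -E1 -mulrA big_distrl /=.
  by rewrite addrAC subrr add0r.
under eq_bigr do rewrite (inversion f1 (x + _)) big_distrl /=.
rewrite /Cc.
under [RHS]eq_bigr do rewrite big_distrl /=.
rewrite [RHS]exchange_big /=.
under [RHS]eq_bigr => eta _.
  rewrite (reindex_inj (addIr eta)) /=.
  over.
rewrite big_distrr /=.
under eq_bigr => y _.
  rewrite big_distrr /=.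
  under eq_bigr do rewrite big_distrr /=.
  over.
rewrite exchange_big /=.
under eq_bigr do under eq_bigr do rewrite big_distrr /=.
under eq_bigr do rewrite exchange_big /=.
rewrite exchange_big /=.
apply: eq_bigr => eta _; apply: eq_bigr => xi _.
rewrite addrK /S.
rewrite [RHS]mulrC !big_distrr /=.
apply: eq_bigr => y _.
transitivity (p%:R^-1 * (fh f1 xi * Bof f2 eta) * (e (xi * (x + y)) * e (eta * (x + y ^+ 2)))).
  by ring.
rewrite eDF' gen_id2 -eDF'; ring.
Qed.


End Fourier.


Lemma root_exists (R : realType) (n : nat) : (1 < n)%N ->
  exists w : R[i], w ^+ n = 1 /\ \sum_(i < n) w ^+ i = 0.
Proof.
case: n => [|[|n]] // _.
have [x hx] := @solve_monicpoly R[i] n.+1 (fun _ => -1) isT.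
have hs : \sum_(i < n.+2) x ^+ i = 0.
  by rewrite big_ord_recr /= hx -big_split /= big1 // => i _; rewrite mulN1r subrr.
exists x; split => //.
by apply/eqP; rewrite -subr_eq0 subrX1 hs mulr0.
Qed.

Section Assembly.
Variable R : realType.
Local Notation C := R[i].
Local Notation nc := (@ComplexField.Normc.normc R).
Variable p : nat.
Hypothesis pP : prime p.
Local Notation F := 'F_p.
Local Notation pi := ((p%:R : R)^-1).

Definition ms (f : F -> C) : R := pi * \sum_(x : F) nc (f x) ^+ 2.

Lemma ms_ge0 f : 0 <= ms f.
Proof.
by rewrite /ms mulr_ge0 ?invr_ge0 ?ler0n // sumr_ge0 // => x _; rewrite exprn_ge0 // nc_ge0.
Qed.

Lemma assembly (f1 f2 : F -> C) :
  exists (w : C) (wm : w ^+ (Zp_trunc (pdiv p)).+2 = 1) (ws : \sum_(i < (Zp_trunc (pdiv p)).+2) w ^+ i = 0),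
  ms (fun x => Fop0 f1 f2 x - expect0 f1 * expect0 f2) =
     \sum_(z : F) nc (Cc w (fh w f1) (Bof w f2) z) ^+ 2 /\
  XA (fh w f1) = ms f1 /\ XB (Bof w f2) <= ms f2 /\ Bof w f2 0 = 0.
Proof.
have [w [wm ws]] := root_exists R (isT : (1 < (Zp_trunc (pdiv p)).+2)%N).
exists w, wm, ws; split; last split; last split.
- rewrite /ms -[RHS](parseval_trig pP wm ws); congr (_ * _); apply: eq_bigr => x _.
  by rewrite (main_identity pP wm ws).
- by rewrite /XA (parseval pP wm ws).
- rewrite /XB /ms -(parseval pP wm ws); apply: ler_sum => x _.
  rewrite /Bof; case: ifP => _ //.
  by rewrite ComplexField.Normc.normc0 expr0n /= exprn_ge0 // nc_ge0.
- by rewrite /Bof eqxx.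
Qed.

Lemma bound_all (f1 f2 : F -> C) :
  ms (fun x => Fop0 f1 f2 x - expect0 f1 * expect0 f2) <= p%:R * (ms f1 * ms f2).
Proof.
have [w [wm [ws [-> [hA [hB _]]]]]] := assembly f1 f2.
apply: le_trans (trivial_bound pP wm _ _) _.
rewrite hA ler_wpM2l // ler_wpM2l ?ms_ge0 //.
Qed.

Lemma bound_odd (f1 f2 : F -> C) : p != 2%N ->
  ms (fun x => Fop0 f1 f2 x - expect0 f1 * expect0 f2) <=
     (pi + Num.sqrt (Num.sqrt (2%:R * pi))) * (ms f1 * ms f2).
Proof.
move=> p2.
have [w [wm [ws [-> [hA [hB h0]]]]]] := assembly f1 f2.
apply: le_trans (core_bound pP p2 wm ws _ h0) _.
rewrite hA ler_wpM2l //.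
  by rewrite addr_ge0 ?sqrtr_ge0 // invr_ge0 ler0n.
by rewrite ler_wpM2l ?ms_ge0.
Qed.

End Assembly.

End Dev.

Section FinalReal.
Variable R : realType.

Lemma powR_facts (p : nat) : (2 <= p)%N ->
  let P := (p%:R : R) in let t := P `^ (20%:R)^-1 in
  [/\ t ^+ 20 = P, 1 <= t & P `^ (- (10%:R)^-1) = (t ^+ 2)^-1].
Proof.
move=> hp P t.
have P1 : 1 <= P by rewrite /P ler1n; apply: leq_trans hp.
have P0 : 0 <= P by apply: le_trans P1.
have t0 : 0 <= t by exact: powR_ge0.
split.
- rewrite -powR_mulrn // /t -powRrM mulVf ?powRr1 //.
  by rewrite pnatr_eq0.
- have h0 : (0:R) <= (20%:R)^-1 by rewrite invr_ge0 ler0n.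
  by have := ler_powR P1 h0; rewrite powRr0.
- rewrite powRN; congr (_^-1).
  rewrite -powR_mulrn // /t -powRrM; congr (P `^ _).
  by field; rewrite ?pnatr_eq0.
Qed.

Lemma sqrt_bound (p : nat) (K : R) : (2 <= p)%N -> 0 <= K ->
  (p = 2%N -> K <= p%:R) ->
  (p <> 2%N -> K <= (p%:R)^-1 + Num.sqrt (Num.sqrt (2%:R * (p%:R)^-1))) ->
  Num.sqrt K <= 2%:R * (p%:R : R) `^ (- (10%:R)^-1).
Proof.
move=> hp K0 h2 hodd.
have [h20 t1 ->] := powR_facts hp.
set t := (p%:R : R) `^ (20%:R)^-1 in h20 t1 *.
have t0 : 0 < t by apply: lt_le_trans t1.
set s := t ^+ 4.
have s1 : 1 <= s by rewrite /s exprn_ege1.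
have s0 : 0 < s by apply: lt_le_trans s1.
have hs5 : s ^+ 5 = p%:R by rewrite /s -exprM.
have goal : K <= 4%:R / s.
  case: (eqVneq p 2%N) => [e2|n2].
    apply: le_trans (h2 e2) _.
    rewrite -hs5 ler_pdivlMr //.
    have : s ^+ 5 = 2%:R by rewrite hs5 e2.
    move=> h5.
    have ss : s <= 2%:R.
      by rewrite -h5 ler_eXnr.
    by rewrite h5; lra.
  apply: le_trans (hodd (elimN eqP n2)) _.
  set u := s^-1.
  have u0 : 0 < u by rewrite invr_gt0.
  have u1 : u <= 1 by rewrite invr_le1 // ?unitfE ?gt_eqF.
  have pu : (p%:R : R)^-1 = u ^+ 5 by rewrite -hs5 exprVn.
  rewrite pu.
  set rr := Num.sqrt (Num.sqrt (2%:R * u ^+ 5)).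
  have rr0 : 0 <= rr by exact: sqrtr_ge0.
  have rr4 : rr ^+ 4 = 2%:R * u ^+ 5.
    rewrite /rr (_ : 4 = 2 * 2)%N // exprM !sqr_sqrtr //; last exact: sqrtr_ge0.
    by rewrite mulr_ge0 // exprn_ge0 // ltW.
  have rle : rr <= 2%:R * u.
    have hh : (rr ^+ 4 <= (2%:R * u) ^+ 4) = (rr <= 2%:R * u).
      by apply: ler_pXn2r; rewrite // nnegrE ?mulr_ge0 // ltW.
    rewrite -hh rr4.
    rewrite exprMn (_ : u ^+ 5 = u ^+ 4 * u); last by rewrite exprSr.
    have u4 : 0 <= u ^+ 4 by rewrite exprn_ge0 // ltW.
    move: u4; set v := u ^+ 4 => u4.
    rewrite (_ : (2%:R : R) ^+ 4 = 16%:R); last by rewrite -natrX.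
    nra.
  have u5 : u ^+ 5 <= u.
    by rewrite ler_iXnr // ltW.
  lra.
have r0 : 0 <= 2%:R / t ^+ 2 by rewrite mulr_ge0 // invr_ge0 exprn_ge0 // ltW.
rewrite -(ger0_norm r0) -sqrtr_sqr ler_sqrt ?sqr_ge0 //.
apply: le_trans goal _; rewrite /s.
rewrite le_eqVlt; apply/orP; left; apply/eqP.
rewrite (_ : 4 = 2 * 2)%N // exprM; field.
by rewrite gt_eqF.
Qed.

End FinalReal.

Theorem theorem1p1 (R : realType) :
  exists c : R, 0 < c /\
  forall (p : nat), prime p -> forall (f1 f2 : 'F_p -> R[i]),
    l2norm (fun x => Fop f1 f2 x - expect f1 * expect f2)
      <= c * ((p%:R : R) `^ (- (10%:R)^-1)) * l2norm f1 * l2norm f2.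
Proof.
exists 2%:R; split; first by rewrite ltr0n.
move=> p pP f1 f2.
have hp : (2 <= p)%N := prime_gt1 pP.
have E : forall f : 'F_p -> R[i], l2norm f = Num.sqrt (Dev.ms f) by [].
rewrite !E.
set K : R := if p == 2%N then p%:R else (p%:R)^-1 + Num.sqrt (Num.sqrt (2%:R * (p%:R)^-1)).
have K0 : 0 <= K.
  rewrite /K; case: ifP => _; first by rewrite ler0n.
  by rewrite addr_ge0 ?sqrtr_ge0 // invr_ge0 ler0n.
have hK : Dev.ms (fun x => Fop f1 f2 x - expect f1 * expect f2) <= K * (Dev.ms f1 * Dev.ms f2).
  rewrite /K; case: eqP => [e2|n2].
    exact: (Dev.bound_all pP f1 f2).
  exact: (Dev.bound_odd pP f1 f2 (introN eqP n2)).
have m1 := Dev.ms_ge0 f1; have m2 := Dev.ms_ge0 f2.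
apply: le_trans (_ : Num.sqrt K * (Num.sqrt (Dev.ms f1) * Num.sqrt (Dev.ms f2)) <= _).
  by rewrite -(sqrtrM _ m1) -(sqrtrM _ K0); apply: ler_wsqrtr.
rewrite -mulrA ler_wpM2r ?mulr_ge0 ?sqrtr_ge0 //.
apply: sqrt_bound => //.
  by move=> e2; rewrite /K e2.
by move=> n2; rewrite /K; case: eqP.
Qed.
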